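(* Let $f\in C^\infty(\mathbb{R}^2)$ be a real-valued function whose zero set $\{x\in\mathbb{R}^2: f(x)=0\}$ is exactly the Hawaiian earring \[ \mathcal H=\bigcup_{k=1}^{\infty}\left\{(x,y)\in\mathbb{R}^2:\left(x-\tfrac1k\right)^2+y^2=\tfrac1{k^2}\right\}. \] Then $f$ is flat at the origin (all partial derivatives of all orders of $f$ vanish at $0$), and $f$ does not satisfy a Łojasiewicz inequality with respect to $\mathcal H$ at $0$: there exist no constants $C>0$ and $\theta>0$ such that \[ |f(x)|\ge C\,\mathrm{dist}(x,\mathcal H)^\theta \] for all $x$ in a neighborhood of $0$.
   Context: $\mathrm{dist}(x,\mathcal H)$ denotes the Euclidean distance from $x$ to the set $\mathcal H$. *)

(* Defs.v *)
From Stdlib Require Import Reals Lra List.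
From Coquelicot Require Import Coquelicot.
Open Scope R_scope.

(* Iterated partial derivatives of f : R^2 -> R (curried).  A direction
   [true] means d/dx, [false] means d/dy; the head of the list is applied last. *)
Fixpoint pderiv (l : list bool) (f : R -> R -> R) : R -> R -> R :=
  match l with
  | nil => f
  | b :: l' =>
      let g := pderiv l' f in
      if b then (fun x y => Derive (fun t => g t y) x)
           else (fun x y => Derive (fun t => g x t) y)
  end.

Definition continuous2 (g : R -> R -> R) (x0 y0 : R) : Prop :=
  forall eps, 0 < eps -> exists delta, 0 < delta /\
    forall x y, sqrt ((x - x0) ^ 2 + (y - y0) ^ 2) < delta ->
      Rabs (g x y - g x0 y0) < eps.

Definition smooth2 (f : R -> R -> R) : Prop :=
  forall l : list bool, forall x y,
    ex_derive (fun t => pderiv l f t y) x /\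
    ex_derive (fun t => pderiv l f x t) y /\
    continuous2 (pderiv l f) x y.

Definition hawaiian (x y : R) : Prop :=
  exists k : nat, (1 <= k)%nat /\
    (x - / INR k) ^ 2 + y ^ 2 = / (INR k) ^ 2.

Definition dist_H (x y : R) : R :=
  real (Glb_Rbar (fun d => exists a b, hawaiian a b /\
                      d = sqrt ((x - a) ^ 2 + (y - b) ^ 2))).

(* d^theta for d >= 0, theta > 0, with the convention 0^theta = 0. *)
Definition rpow0 (d theta : R) : R :=
  if Rle_dec d 0 then 0 else Rpower d theta.

(* Main.v *)
Require Import Defs.
From Stdlib Require Import Reals List.
From Coquelicot Require Import Coquelicot.
From Stdlib Require Import Lra Lia FunctionalExtensionality.
Open Scope R_scope.

Lemma sqrt_sum_le (a b : R) : sqrt (a ^ 2 + b ^ 2) <= Rabs a + Rabs b.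
Proof.
  rewrite <- (sqrt_pow2 (Rabs a + Rabs b)).
  2: { pose proof (Rabs_pos a); pose proof (Rabs_pos b); lra. }
  apply sqrt_le_1_alt.
  rewrite <- (pow2_abs a), <- (pow2_abs b).
  pose proof (Rabs_pos a); pose proof (Rabs_pos b); nra.
Qed.

Lemma cont2_2d (g : R -> R -> R) x y : continuous2 g x y -> continuity_2d_pt g x y.
Proof.
  intros H eps. destruct (H eps (cond_pos eps)) as [d [Hd Hg]].
  assert (Hd2 : 0 < d / 2) by lra.
  exists (mkposreal _ Hd2). intros u v Hu Hv. simpl in *.
  apply Hg. eapply Rle_lt_trans. apply sqrt_sum_le. lra.
Qed.

Lemma is_derive_cont (g : R -> R) x l : is_derive g x l ->
  forall eps, 0 < eps -> exists d, 0 < d /\ forall y, Rabs (y - x) < d -> Rabs (g y - g x) < eps.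
Proof.
  intros H. apply is_derive_Reals in H.
  assert (Hc : continuity_pt g x).
  { apply derivable_continuous_pt. exists l. exact H. }
  intros eps Heps. destruct (Hc eps Heps) as [d [Hd Hy]].
  exists d; split; auto. intros y Hy'.
  destruct (Req_dec y x) as [->|Hne].
  - replace (g x - g x) with 0 by ring. rewrite Rabs_R0; lra.
  - apply (Hy y). split. split; [exact I| auto]. exact Hy'.
Qed.

Lemma diff_partials (g : R -> R -> R) x0 y0 ly :
  (forall u v, ex_derive (fun s => g s v) u) ->
  continuous2 (fun u v => Derive (fun s => g s v) u) x0 y0 ->
  is_derive (fun v => g x0 v) y0 ly ->
  differentiable_pt_lim g x0 y0 (Derive (fun s => g s y0) x0) ly.
Proof.
  intros Hex Hc Hy eps.
  assert (He2 : 0 < eps / 2) by (pose proof (cond_pos eps); lra).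
  destruct (Hc _ He2) as [d1 [Hd1 H1]].
  apply is_derive_Reals in Hy. destruct (Hy _ He2) as [d2 H2].
  assert (Hd : 0 < Rmin (d1/2) d2) by (apply Rmin_pos; [lra| apply cond_pos]).
  exists (mkposreal _ Hd). intros u v Hu Hv. simpl in Hu, Hv.
  pose proof (Rmin_l (d1/2) d2). pose proof (Rmin_r (d1/2) d2).
  set (Lx := Derive (fun s => g s y0) x0).
  destruct (MVT_cor4 (fun s => g s v) (fun s => Derive (fun s' => g s' v) s) x0 (Rabs (u - x0)))
    with (b := u) as [c [Hc1 Hc2]].
  { intros c _. apply Derive_correct. apply Hex. }
  { lra. }
  assert (Hgc : Rabs (Derive (fun s' => g s' v) c - Lx) < eps / 2).
  { apply H1. eapply Rle_lt_trans. apply sqrt_sum_le. lra. }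
  assert (HA : Rabs (g u v - g x0 v - Lx * (u - x0)) <= eps / 2 * Rabs (u - x0)).
  { rewrite Hc1. replace (Derive (fun s' : R => g s' v) c * (u - x0) - Lx * (u - x0))
      with ((Derive (fun s' : R => g s' v) c - Lx) * (u - x0)) by ring.
    rewrite Rabs_mult. apply Rmult_le_compat_r. apply Rabs_pos. lra. }
  assert (HB : Rabs (g x0 v - g x0 y0 - ly * (v - y0)) <= eps / 2 * Rabs (v - y0)).
  { destruct (Req_dec v y0) as [->|Hne].
    - replace (g x0 y0 - g x0 y0 - ly * (y0 - y0)) with 0 by ring.
      rewrite Rabs_R0, Rminus_diag, Rabs_R0. lra.
    - assert (Hh : v - y0 <> 0) by lra.
      specialize (H2 (v - y0) Hh). replace (y0 + (v - y0)) with v in H2 by ring.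
      assert (H2' : Rabs ((g x0 v - g x0 y0) / (v - y0) - ly) < eps / 2) by (apply H2; lra).
      replace (g x0 v - g x0 y0 - ly * (v - y0)) with (((g x0 v - g x0 y0) / (v - y0) - ly) * (v - y0))
        by (field; auto).
      rewrite Rabs_mult. apply Rmult_le_compat_r. apply Rabs_pos. lra. }
  replace (g u v - g x0 y0 - (Lx * (u - x0) + ly * (v - y0))) with
    ((g u v - g x0 v - Lx * (u - x0)) + (g x0 v - g x0 y0 - ly * (v - y0))) by ring.
  eapply Rle_trans. apply Rabs_triang.
  pose proof (Rmax_l (Rabs (u - x0)) (Rabs (v - y0))).
  pose proof (Rmax_r (Rabs (u - x0)) (Rabs (v - y0))).
  pose proof (cond_pos eps). nra.
Qed.

Lemma ray_deriv (f : R -> R -> R) (Hs : smooth2 f) w t r :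
  is_derive (fun s => pderiv w f s (s * t)) r
    (pderiv (true :: w) f r (r * t) + t * pderiv (false :: w) f r (r * t)).
Proof.
  set (g := pderiv w f).
  assert (Hd : differentiable_pt_lim g r (r * t) (pderiv (true :: w) f r (r * t))
                 (pderiv (false :: w) f r (r * t))).
  { apply diff_partials.
    - intros u v. apply (Hs w u v).
    - apply (Hs (true :: w)).
    - apply Derive_correct. apply (Hs w r (r * t)). }
  pose proof (derivable_pt_lim_comp_2d g (fun s => s) (fun s => s * t) r _ _ 1 t Hd) as H.
  apply is_derive_Reals.
  replace (pderiv (true :: w) f r (r * t) + t * pderiv (false :: w) f r (r * t)) with
    (pderiv (true :: w) f r (r * t) * 1 + pderiv (false :: w) f r (r * t) * t) by ring.
  apply H.
  - apply is_derive_Reals. auto_derive; auto.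
  - apply is_derive_Reals. auto_derive; auto. ring.
Qed.

Fixpoint words (n : nat) : list (list bool) :=
  match n with
  | O => nil :: nil
  | S n => map (cons true) (words n) ++ map (cons false) (words n)
  end.

Fixpoint yc (w : list bool) : nat :=
  match w with nil => O | b :: w => if b then yc w else S (yc w) end.

Definition lsum (ws : list (list bool)) (F : list bool -> R) : R :=
  fold_right (fun w acc => F w + acc) 0 ws.

Lemma lsum_app a b F : lsum (a ++ b) F = lsum a F + lsum b F.
Proof. induction a; simpl; [ring|]. unfold lsum in *. simpl. rewrite IHa. ring. Qed.

Lemma lsum_map g l F : lsum (map g l) F = lsum l (fun w => F (g w)).
Proof. induction l; simpl; auto. unfold lsum in *; simpl; rewrite IHl; auto. Qed.

Lemma lsum_ext l F G : (forall w, In w l -> F w = G w) -> lsum l F = lsum l G.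
Proof. induction l; simpl; intros H; auto. unfold lsum in *; simpl.
  rewrite H by auto. rewrite IHl; auto. Qed.

Lemma lsum_plus l F G : lsum l (fun w => F w + G w) = lsum l F + lsum l G.
Proof. induction l; simpl; [ring|]. unfold lsum in *; simpl; rewrite IHl; ring. Qed.

Lemma lsum_scal l c F : lsum l (fun w => c * F w) = c * lsum l F.
Proof. induction l; simpl; [ring|]. unfold lsum in *; simpl; rewrite IHl; ring. Qed.

Lemma is_derive_lsum l (F F' : list bool -> R -> R) r :
  (forall w, is_derive (F w) r (F' w r)) ->
  is_derive (fun s => lsum l (fun w => F w s)) r (lsum l (fun w => F' w r)).
Proof.
  intros H. induction l; simpl.
  - apply is_derive_Reals; apply derivable_pt_lim_const.
  - apply (is_derive_plus (fun s => F a s) (fun s => lsum l (fun w => F w s))); auto.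
Qed.

Definition Sn (f : R -> R -> R) t n r :=
  lsum (words n) (fun w => t ^ (yc w) * pderiv w f r (r * t)).

Lemma Sn_deriv f (Hs : smooth2 f) t n r : is_derive (Sn f t n) r (Sn f t (S n) r).
Proof.
  assert (E : Sn f t (S n) r = lsum (words n) (fun w => t ^ (yc w) *
     (pderiv (true :: w) f r (r * t) + t * pderiv (false :: w) f r (r * t)))).
  { unfold Sn. simpl. rewrite lsum_app, !lsum_map. simpl.
    rewrite <- lsum_plus. apply lsum_ext. intros; ring. }
  rewrite E. unfold Sn.
  apply (is_derive_lsum (words n) (fun w s => t ^ (yc w) * pderiv w f s (s * t))
          (fun w s => t ^ (yc w) * (pderiv (true :: w) f s (s * t) + t * pderiv (false :: w) f s (s * t)))).
  intros w. apply is_derive_scal. apply ray_deriv; auto.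
Qed.

Lemma Dn_Sn f (Hs : smooth2 f) t n r : Derive_n (fun s => f s (s * t)) n r = Sn f t n r.
Proof.
  revert r; induction n; intros r.
  - unfold Sn; simpl. unfold lsum; simpl. ring.
  - simpl. rewrite (Derive_ext _ (Sn f t n)) by auto.
    apply is_derive_unique. apply Sn_deriv; auto.
Qed.

Lemma Dn_deriv f (Hs : smooth2 f) t n r :
  is_derive (Derive_n (fun s => f s (s * t)) n) r (Derive_n (fun s => f s (s * t)) (S n) r).
Proof.
  rewrite Dn_Sn by auto. eapply is_derive_ext.
  2: apply Sn_deriv; auto. intros; simpl. rewrite Dn_Sn; auto.
Qed.

Definition Zp (g : R -> R) := forall eps, 0 < eps -> exists z, 0 < z < eps /\ g z = 0.

Lemma Zp_deriv (G G' : R -> R) : (forall r, is_derive G r (G' r)) -> Zp G -> Zp G'.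
Proof.
  intros Hd HZ eps He.
  destruct (HZ eps He) as [z1 [Hz1 E1]].
  destruct (HZ z1 (proj1 Hz1)) as [z2 [Hz2 E2]].
  destruct (MVT_cor2 G G' z2 z1) as [c [Hc1 Hc2]].
  - lra.
  - intros c _. apply is_derive_Reals. apply Hd.
  - exists c. split; [lra|]. rewrite E1, E2 in Hc1.
    assert (G' c * (z1 - z2) = 0) by lra.
    apply Rmult_integral in H. destruct H; auto. lra.
Qed.

Lemma Zp_zero (G : R -> R) l : is_derive G 0 l -> Zp G -> G 0 = 0.
Proof.
  intros Hd HZ. destruct (Req_dec (G 0) 0) as [|Hne]; auto.
  assert (Hp : 0 < Rabs (G 0) / 2) by (apply Rabs_pos_lt in Hne; lra).
  destruct (is_derive_cont _ _ _ Hd _ Hp) as [d [Hd0 Hc]].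
  destruct (HZ d Hd0) as [z [Hz E]].
  specialize (Hc z). rewrite E in Hc.
  assert (Rabs (z - 0) < d) by (rewrite Rminus_0_r, Rabs_right; lra).
  specialize (Hc H). replace (0 - G 0) with (- G 0) in Hc by ring.
  rewrite Rabs_Ropp in Hc. lra.
Qed.

Lemma Zlemma (g : R -> R) :
  (forall n r, is_derive (Derive_n g n) r (Derive_n g (S n) r)) -> Zp g ->
  forall n, Derive_n g n 0 = 0.
Proof.
  intros Hd HZ n.
  assert (Zn : Zp (Derive_n g n)).
  { induction n; [exact HZ|]. apply (Zp_deriv (Derive_n g n)); auto. }
  eapply Zp_zero; eauto.
Qed.

Lemma zeros_ray f (Hf : forall x y, f x y = 0 <-> hawaiian x y) t :
  Zp (fun s => f s (s * t)).
Proof.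
  intros eps He.
  destruct (INR_unbounded (2 / eps)) as [k Hk].
  assert (Hk0 : (1 <= k)%nat).
  { destruct k; [simpl in Hk; assert (0 < 2 / eps) by (apply Rdiv_lt_0_compat; lra); lra| lia]. }
  assert (HkR : 0 < INR k) by (apply lt_0_INR; lia).
  assert (Ht : 0 < 1 + t ^ 2) by nra.
  exists (2 / (INR k * (1 + t ^ 2))). split; [split|].
  - apply Rdiv_lt_0_compat; [lra| nra].
  - apply (Rmult_lt_reg_r (INR k * (1 + t ^ 2))); [nra|].
    unfold Rdiv. rewrite Rmult_assoc, Rinv_l by nra.
    assert (2 < eps * INR k).
    { apply (Rmult_lt_reg_r (/ eps)). apply Rinv_0_lt_compat; lra.
      replace (eps * INR k * / eps) with (INR k) by (field; lra). exact Hk. }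
    nra.
  - apply Hf. exists k. split; auto.
    field. split; nra.
Qed.

Lemma pderiv_app p l f : pderiv (p ++ l) f = pderiv p (pderiv l f).
Proof. induction p; simpl; auto. rewrite IHp. reflexivity. Qed.

Lemma swap f (Hs : smooth2 f) w : pderiv (true :: false :: w) f = pderiv (false :: true :: w) f.
Proof.
  apply functional_extensionality; intro x; apply functional_extensionality; intro y.
  simpl. set (g := pderiv w f).
  apply (Schwarz g x y).
  - exists (mkposreal 1 Rlt_0_1). intros u v _ _.
    split; [apply (Hs w u v)|]. split; [apply (Hs w u v)|].
    split; [apply (Hs (false :: w) u v)| apply (Hs (true :: w) u v)].
  - apply cont2_2d. apply (Hs (true :: false :: w)).
  - apply cont2_2d. apply (Hs (false :: true :: w)).
Qed.

Lemma move_false f (Hs : smooth2 f) i l :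
  pderiv (false :: repeat true i ++ l) f = pderiv (repeat true i ++ false :: l) f.
Proof.
  induction i; [reflexivity|].
  change (pderiv (false :: true :: (repeat true i ++ l)) f = pderiv (true :: (repeat true i ++ false :: l)) f).
  rewrite <- swap by auto.
  change (pderiv ((true :: nil) ++ (false :: repeat true i ++ l)) f = pderiv ((true :: nil) ++ (repeat true i ++ false :: l)) f).
  rewrite !(pderiv_app (true :: nil)). rewrite IHi. reflexivity.
Qed.

Fixpoint xc (w : list bool) : nat :=
  match w with nil => O | b :: w => if b then S (xc w) else xc w end.

Lemma canon f (Hs : smooth2 f) w :
  pderiv w f = pderiv (repeat true (xc w) ++ repeat false (yc w)) f.
Proof.
  induction w as [|b w IH]; [reflexivity|].
  destruct b; cbn [xc yc repeat app].
  - change (pderiv (true :: w) f) with (pderiv ((true :: nil) ++ w) f).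
    rewrite pderiv_app, IH, <- pderiv_app. reflexivity.
  - change (pderiv (false :: w) f) with (pderiv ((false :: nil) ++ w) f).
    rewrite pderiv_app, IH, <- pderiv_app. cbn [app].
    rewrite move_false by auto. reflexivity.
Qed.

Lemma xc_yc w : (xc w + yc w = length w)%nat.
Proof. induction w as [|[|] w]; simpl; lia. Qed.

Lemma words_len n w : In w (words n) -> length w = n.
Proof.
  revert w; induction n; simpl; intros w H.
  - destruct H as [<-|[]]; auto.
  - apply in_app_or in H. destruct H as [H|H]; apply in_map_iff in H;
    destruct H as [w' [<- H]]; simpl; rewrite IHn; auto.
Qed.

Fixpoint NN (n j : nat) : R :=
  match n with
  | O => match j with O => 1 | S _ => 0 end
  | S n => NN n j + match j with O => 0 | S j' => NN n j' end
  end.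

Lemma NN_nonneg n j : 0 <= NN n j.
Proof. revert j; induction n; intros [|j]; simpl; try lra.
  - specialize (IHn 0%nat); lra.
  - pose proof (IHn (S j)); pose proof (IHn j); lra. Qed.

Lemma NN_pos n j : (j <= n)%nat -> 1 <= NN n j.
Proof. revert j; induction n; intros [|j] Hj; simpl; try lra; try lia.
  - specialize (IHn 0%nat ltac:(lia)); lra.
  - pose proof (NN_nonneg n (S j)); pose proof (NN_nonneg n j).
    destruct (Nat.eq_dec j n) as [->|Hne].
    + specialize (IHn n ltac:(lia)); lra.
    + specialize (IHn (S j) ltac:(lia)); lra. Qed.

Lemma NN_zero n j : (n < j)%nat -> NN n j = 0.
Proof. revert j; induction n; intros [|j] Hj; simpl; try lia; auto.
  rewrite IHn by lia. rewrite IHn by lia. ring. Qed.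

Lemma sum_shift a M : sum_f_R0 a (S M) = a 0%nat + sum_f_R0 (fun j => a (S j)) M.
Proof. induction M; simpl; [ring|]. simpl in IHM. rewrite IHM. ring. Qed.

Lemma sum_ext' a b M : (forall j, a j = b j) -> sum_f_R0 a M = sum_f_R0 b M.
Proof. intros H; induction M; simpl; rewrite ?IHM, H; auto. Qed.

Lemma sum_plus' a b M : sum_f_R0 (fun j => a j + b j) M = sum_f_R0 a M + sum_f_R0 b M.
Proof. induction M; simpl; [ring|]; rewrite IHM; ring. Qed.

Lemma sum_scal' c a M : sum_f_R0 (fun j => c * a j) M = c * sum_f_R0 a M.
Proof. induction M; simpl; [ring|]; rewrite IHM; ring. Qed.

Lemma W_ident n (q : nat -> R) t M : (n <= M)%nat ->
  lsum (words n) (fun w => t ^ (yc w) * q (yc w)) = sum_f_R0 (fun j => NN n j * q j * t ^ j) M.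
Proof.
  revert q M; induction n; intros q M HM.
  - unfold lsum; simpl. induction M; simpl; [ring|].
    simpl in IHM. rewrite <- IHM by lia. ring.
  - simpl. rewrite lsum_app, !lsum_map. cbn [yc].
    rewrite (IHn q M) by lia.
    rewrite (lsum_ext _ _ (fun w => t * (t ^ yc w * q (S (yc w))))) by (intros; simpl; ring).
    rewrite lsum_scal. rewrite (IHn (fun j => q (S j)) M) by lia.
    rewrite (sum_ext' (fun j => NN (S n) j * q j * t ^ j) (fun j => NN n j * q j * t ^ j + (match j with O => 0 | S j' => NN n j' end) * q j * t ^ j)) by (intros; simpl; ring).
    rewrite sum_plus'. f_equal.
    destruct M as [|M]; [lia|].
    symmetry. rewrite (sum_shift _ M). cbn beta iota.
    change (sum_f_R0 (fun j : nat => NN n j * q (S j) * t ^ j) (S M)) with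
      (sum_f_R0 (fun j : nat => NN n j * q (S j) * t ^ j) M + NN n (S M) * q (S (S M)) * t ^ (S M)).
    rewrite (NN_zero n (S M)) by lia.
    rewrite Rmult_plus_distr_l, <- sum_scal'.
    rewrite (sum_ext' (fun j => t * (NN n j * q (S j) * t ^ j)) (fun j => NN n j * q (S j) * t ^ S j)) by (intros; simpl; ring).
    ring.
Qed.

Lemma pow_le1 t j : 0 < t <= 1 -> 0 < t ^ j <= 1.
Proof. intros H; induction j; simpl; [lra|]. nra. Qed.

Lemma poly_zero M (c : nat -> R) :
  (forall t, 0 < t -> sum_f_R0 (fun j => c j * t ^ j) M = 0) -> forall j, (j <= M)%nat -> c j = 0.
Proof.
  revert c; induction M; intros c H j Hj.
  - assert (j = 0%nat) by lia; subst. specialize (H 1 Rlt_0_1). simpl in H. lra.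
  - set (B := sum_f_R0 (fun i => Rabs (c (S i))) M).
    assert (HB : 0 <= B).
    { unfold B. clear. induction M; simpl; [apply Rabs_pos|]. pose proof (Rabs_pos (c (S (S M)))); lra. }
    assert (Hdec : forall t, 0 < t -> c 0%nat + t * sum_f_R0 (fun i => c (S i) * t ^ i) M = 0).
    { intros t Ht. rewrite <- (H t Ht), sum_shift. simpl. rewrite <- sum_scal'.
      f_equal. ring. apply sum_ext'. intros; simpl; ring. }
    assert (Hbound : forall t, 0 < t <= 1 -> Rabs (sum_f_R0 (fun i => c (S i) * t ^ i) M) <= B).
    { intros t Ht. eapply Rle_trans. apply sum_f_R0_triangle. unfold B. apply sum_Rle.
      intros i _. rewrite Rabs_mult. pose proof (pow_le1 t i Ht).
      rewrite (Rabs_right (t ^ i)) by lra. pose proof (Rabs_pos (c (S i))). nra. }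
    assert (H0 : c 0%nat = 0).
    { destruct (Req_dec (c 0%nat) 0) as [|Hne]; auto.
      assert (Hp : 0 < Rabs (c 0%nat)) by (apply Rabs_pos_lt; auto).
      set (t := Rmin 1 (Rabs (c 0%nat) / (2 * (B + 1)))).
      assert (Ht1 : 0 < t <= 1).
      { unfold t. split. apply Rmin_pos; [lra|]. apply Rdiv_lt_0_compat; lra. apply Rmin_l. }
      assert (Ht2 : t * (B + 1) <= Rabs (c 0%nat) / 2).
      { assert (t <= Rabs (c 0%nat) / (2 * (B + 1))) by apply Rmin_r.
        apply (Rmult_le_compat_r (B + 1)) in H0; [|lra].
        replace (Rabs (c 0%nat) / (2 * (B + 1)) * (B + 1)) with (Rabs (c 0%nat) / 2) in H0 by (field; lra).
        exact H0. }
      specialize (Hdec t (proj1 Ht1)). specialize (Hbound t Ht1).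
      assert (Hc0 : c 0%nat = - (t * sum_f_R0 (fun i : nat => c (S i) * t ^ i) M)) by lra.
      assert (Rabs (c 0%nat) <= t * B).
      { rewrite Hc0, Rabs_Ropp, Rabs_mult, Rabs_right by lra. nra. }
      nra. }
    destruct j as [|j]; auto.
    apply (IHM (fun i => c (S i))); [|lia].
    intros t Ht. specialize (Hdec t Ht). rewrite H0 in Hdec.
    assert (Hz : t * sum_f_R0 (fun i : nat => c (S i) * t ^ i) M = 0) by lra.
    apply Rmult_integral in Hz. destruct Hz; auto. lra.
Qed.

Lemma ray_flat f (Hs : smooth2 f) (Hf : forall x y, f x y = 0 <-> hawaiian x y) t n :
  Derive_n (fun s => f s (s * t)) n 0 = 0.
Proof.
  apply Zlemma. intros; apply Dn_deriv; auto. apply zeros_ray; auto.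
Qed.

Lemma flat f (Hs : smooth2 f) (Hf : forall x y, f x y = 0 <-> hawaiian x y) :
  forall l, pderiv l f 0 0 = 0.
Proof.
  intros l.
  set (n := length l).
  set (q := fun j => pderiv (repeat true (n - j) ++ repeat false j) f 0 0).
  assert (Hc : forall j, (j <= n)%nat -> NN n j * q j = 0).
  { apply (poly_zero n (fun j => NN n j * q j)).
    intros t Ht.
    rewrite <- (W_ident n q t n) by lia.
    pose proof (ray_flat f Hs Hf t n) as H0.
    rewrite Dn_Sn in H0 by auto. unfold Sn in H0.
    rewrite <- H0. apply lsum_ext. intros w Hw.
    rewrite Rmult_0_l. f_equal. rewrite (canon f Hs w).
    unfold q. pose proof (xc_yc w). pose proof (words_len _ _ Hw).
    replace (n - yc w)%nat with (xc w) by lia. reflexivity. }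
  assert (Hj : (yc l <= n)%nat) by (pose proof (xc_yc l); unfold n; lia).
  specialize (Hc _ Hj). pose proof (NN_pos n (yc l) Hj).
  assert (Hq : q (yc l) = 0).
  { apply Rmult_integral in Hc. destruct Hc; auto. lra. }
  rewrite (canon f Hs l). unfold q in Hq.
  pose proof (xc_yc l).
  replace (xc l) with (n - yc l)%nat by (unfold n; lia). exact Hq.
Qed.

Lemma hawaiian_nonneg a b : hawaiian a b -> 0 <= a.
Proof.
  intros [k [Hk E]].
  assert (HkR : 0 < INR k) by (apply lt_0_INR; lia).
  set (r := / INR k) in *.
  assert (Hr : 0 < r) by (apply Rinv_0_lt_compat; auto).
  replace (/ INR k ^ 2) with (r ^ 2) in E by (unfold r; field; lra).
  destruct (Rle_or_lt 0 a); auto. nra.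
Qed.

Lemma dist_neg s : 0 < s -> dist_H (- s) 0 = s.
Proof.
  intros Hs. unfold dist_H.
  assert (Hlb : forall d, (exists a b, hawaiian a b /\ d = sqrt ((- s - a) ^ 2 + (0 - b) ^ 2)) -> s <= d).
  { intros d [a [b [Hab ->]]]. pose proof (hawaiian_nonneg a b Hab).
    rewrite <- (sqrt_pow2 s) at 1 by lra. apply sqrt_le_1_alt. nra. }
  rewrite (is_glb_Rbar_unique _ (Finite s)); [reflexivity|].
  split.
  - intros d Hd. simpl. apply Hlb; auto.
  - intros b Hb. apply Hb. exists 0, 0. split.
    + exists 1%nat. split; auto. simpl. field.
    + replace ((- s - 0) ^ 2 + (0 - 0) ^ 2) with (s ^ 2) by ring. rewrite sqrt_pow2; lra.
Qed.

Lemma flat_bound (G : nat -> R -> R) N d0 :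
  (forall k r, is_derive (G k) r (G (S k) r)) -> (forall k, G k 0 = 0) ->
  (forall u, -d0 < u <= 0 -> Rabs (G N u) <= 1) ->
  forall i j, (i + j = N)%nat -> forall u, -d0 < u <= 0 -> Rabs (G j u) <= Rabs u ^ i.
Proof.
  intros Hd H0 HN i. induction i; intros j Hij u Hu.
  - simpl in Hij; subst. simpl. auto.
  - destruct (MVT_abs (G j) (G (S j)) u 0) as [c [Hc Hci]].
    { intros c _. apply is_derive_Reals. apply Hd. }
    rewrite H0 in Hc. replace (0 - G j u) with (- G j u) in Hc by ring.
    rewrite Rabs_Ropp in Hc. rewrite Hc.
    rewrite Rmin_left in Hci by lra. rewrite Rmax_right in Hci by lra.
    assert (Hcb : Rabs (G (S j) c) <= Rabs c ^ i) by (apply IHi; [lia| lra]).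
    assert (Hcu : Rabs c ^ i <= Rabs u ^ i).
    { apply pow_incr. split. apply Rabs_pos. rewrite !Rabs_left1 by lra. lra. }
    replace (0 - u) with (- u) by ring. rewrite Rabs_Ropp. simpl.
    pose proof (Rabs_pos u). pose proof (Rabs_pos (G (S j) c)). nra.
Qed.

Lemma no_loja f (Hs : smooth2 f) (Hf : forall x y, f x y = 0 <-> hawaiian x y) :
  ~ (exists C theta delta, 0 < C /\ 0 < theta /\ 0 < delta /\
       forall x y, sqrt (x ^ 2 + y ^ 2) < delta ->
         C * rpow0 (dist_H x y) theta <= Rabs (f x y)).
Proof.
  intros [C [th [de [HC [Hth [Hde Hin]]]]]].
  set (h0 := fun s => f s (s * 0)).
  set (G := fun k => Derive_n h0 k).
  assert (Hd : forall k r, is_derive (G k) r (G (S k) r)) by (intros; apply Dn_deriv; auto).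
  assert (H0 : forall k, G k 0 = 0) by (intros; apply ray_flat; auto).
  destruct (INR_unbounded (th + 1)) as [N HN].
  destruct (is_derive_cont _ _ _ (Hd N 0) 1 Rlt_0_1) as [d0 [Hd0 Hc0]].
  assert (HNb : forall u, -d0 < u <= 0 -> Rabs (G N u) <= 1).
  { intros u Hu. specialize (Hc0 u). rewrite H0, !Rminus_0_r in Hc0. apply Rlt_le, Hc0.
    rewrite Rabs_left1 by lra. lra. }
  pose proof (flat_bound G N d0 Hd H0 HNb N 0 ltac:(lia)) as Hb.
  set (s := Rmin (Rmin de d0) (Rmin 1 C) / 2).
  assert (Hs0 : 0 < s).
  { unfold s. apply Rdiv_lt_0_compat; [|lra]. apply Rmin_pos; apply Rmin_pos; lra. }
  assert (Hs1 : s < de /\ s < d0 /\ s < 1 /\ s < C).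
  { unfold s. pose proof (Rmin_l (Rmin de d0) (Rmin 1 C)). pose proof (Rmin_r (Rmin de d0) (Rmin 1 C)).
    pose proof (Rmin_l de d0). pose proof (Rmin_r de d0). pose proof (Rmin_l 1 C). pose proof (Rmin_r 1 C).
    lra. }
  specialize (Hb (- s) ltac:(lra)).
  unfold G in Hb. simpl in Hb. unfold h0 in Hb. rewrite Rmult_0_r in Hb.
  rewrite Rabs_Ropp, (Rabs_right s) in Hb by lra.
  assert (Hq : sqrt ((- s) ^ 2 + 0 ^ 2) < de).
  { replace ((- s) ^ 2 + 0 ^ 2) with (s ^ 2) by ring. rewrite sqrt_pow2; lra. }
  specialize (Hin _ _ Hq). rewrite dist_neg in Hin by lra.
  unfold rpow0 in Hin. destruct (Rle_dec s 0) as [|_]; [lra|].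
  assert (Hpow : s ^ N = Rpower s th * Rpower s (INR N - th)).
  { rewrite <- Rpower_plus. replace (th + (INR N - th)) with (INR N) by ring.
    rewrite Rpower_pow; auto. }
  assert (Hle : Rpower s (INR N - th) <= s).
  { assert (Hln : ln s < 0) by (rewrite <- ln_1; apply ln_increasing; lra).
    rewrite <- (Rpower_1 s) at 2 by lra. unfold Rpower.
    assert (Hm : (INR N - th) * ln s <= 1 * ln s) by nra.
    destruct (Rle_lt_or_eq_dec _ _ Hm) as [Hlt|Heq].
    - apply Rlt_le, exp_increasing, Hlt.
    - rewrite Heq; lra. }
  assert (HP : 0 < Rpower s th) by (unfold Rpower; apply exp_pos).
  nra.
Qed.

Theorem theorem5 (f : R -> R -> R) :
  smooth2 f ->
  (forall x y, f x y = 0 <-> hawaiian x y) ->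
  (forall l : list bool, pderiv l f 0 0 = 0) /\
  ~ (exists C theta delta, 0 < C /\ 0 < theta /\ 0 < delta /\
       forall x y, sqrt (x ^ 2 + y ^ 2) < delta ->
         C * rpow0 (dist_H x y) theta <= Rabs (f x y)).
Proof.
  intros Hs Hf. split.
  - apply flat; auto.
  - apply no_loja; auto.
Qed.
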